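(* Let $R$ be a pmp equivalence relation and $F\subseteq\llbracket R\rrbracket$ finite. For every $\kappa>0$ there is $\varepsilon>0$ such that $s(F,n)\leq s_\varepsilon(F,n)+\kappa$ for all $n\in\mathbb N$. The same holds with $\underline s$ in place of $s$ (both sides), and with $s_\omega$ in place of $s$ for any nonprincipal ultrafilter $\omega$.
   Context: Let $(X,\mu)$ be a standard probability space and $R$ a pmp countable Borel equivalence relation. $\llbracket R\rrbracket$ denotes the set of partial measure-preserving Borel bijections between Borel subsets of $X$ with graph contained in $R$, modulo null sets, with composition, inverses and identity $1$. Pairwise orthogonal elements (pairwise disjoint domains and ranges) have a sum; $\mathbf\Sigma F$ is the set of finite sums of pairwise orthogonal elements of $F$; $F_\pm=F\cup\{s^{-1}:s\in F\}\cup\{1\}$; $F_\pm^n$ the products of $n$ elements of $F_\pm$. $|s-t|=\mu\{x\in\operatorname{dom}s\cup\operatorname{dom}t:s(x)\neq t(x)\}$ (with $s(x)\neq t(x)$ on $\operatorname{dom}s\triangle\operatorname{dom}t$), $\tau(s)=\mu\{x\in\operatorname{dom}s:s(x)=x\}$. $\llbracket d\rrbracket$: partial permutations of $\{1,\dots,d\}$ with uniform measure, same distance, trace $\operatorname{tr}$. ${\rm SA}(F,n,\delta,d)$ is the set of maps $\varphi:\llbracket R\rrbracket\to\llbracket d\rrbracket$ with $\varphi(1)=1$ such that $|\varphi(st)-\varphi(s)\varphi(t)|<\delta$ for all $s,t\in\mathbf\Sigma F_\pm^n$ with $st\in\mathbf\Sigma F_\pm^n$, and $|\operatorname{tr}(\varphi(s))-\tau(s)|<\delta$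 for all $s\in\mathbf\Sigma F_\pm^n$. For maps $\varphi,\psi$ put $|\varphi-\psi|_F=\max_{s\in F}|\varphi(s)-\psi(s)|$, and for $\varepsilon\ge0$ let $N_\varepsilon(S)$ be the minimal number of closed $|\cdot|_F$-balls of radius $\varepsilon$ covering a set $S$ of maps (so $N_0({\rm SA}(F,n,\delta,d))={\rm NSA}(F,n,\delta,d)$, the number of distinct restrictions to $F$). Define $s_\varepsilon(F,n,\delta)=\limsup_{d\to\infty}\frac{1}{d\log d}\log N_\varepsilon({\rm SA}(F,n,\delta,d))$ ($\log0=-\infty$), $s_\varepsilon(F,n)=\inf_{\delta>0}s_\varepsilon(F,n,\delta)$, $s_\varepsilon(F)=\inf_n s_\varepsilon(F,n)$; $s(F,n),s(F)$ are the case $\varepsilon=0$. The versions $\underline s$ use $\liminf_d$ and $s_\omega$ use $\lim_{d\to\omega}$. *)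

(* Defs.v *)
From HB Require Import structures.
From mathcomp Require Import all_boot all_order all_algebra.
From mathcomp Require Import all_classical all_reals all_analysis.
Set Implicit Arguments. Unset Strict Implicit. Unset Printing Implicit Defensive.
Import Order.TTheory GRing.Theory Num.Theory.
Local Open Scope classical_set_scope.
Local Open Scope ring_scope.

(* Standard Borel space: Borel isomorphic to a Borel subset of the reals
   (Kuratowski's characterization).  The measurable sets of X play the role
   of its Borel sets. *)
Definition standard_borel (R : realType) (dX : measure_display)
  (X : measurableType dX) : Prop :=
  exists (B : set R) (f : X -> R) (g : R -> X),
    measurable B /\ measurable_fun setT f /\ measurable_fun B g /\
    f @` setT = B /\ (forall x, g (f x) = x) /\ (forall y, B y -> f (g y) = y).

Definition cber (dX : measure_display) (X : measurableType dX)
  (E : set (X * X)) : Prop :=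
  measurable E /\ (forall x, E (x, x)) /\ (forall x y, E (x, y) -> E (y, x)) /\
  (forall x y z, E (x, y) -> E (y, z) -> E (x, z)) /\
  (forall x, countable [set y | E (x, y)]).

Definition pmp (R : realType) (dX : measure_display) (X : measurableType dX)
  (mu : probability X R) (E : set (X * X)) : Prop :=
  forall (A : set X) (f : X -> X), measurable A -> measurable_fun A f ->
    set_inj A f -> (forall x, A x -> E (x, f x)) -> measurable (f @` A) ->
    mu (f @` A) = mu A.

Section FullPseudogroup.
Variables (R : realType) (dX : measure_display) (X : measurableType dX).
Variables (mu : probability X R) (E : set (X * X)).

(* raw partial maps: a domain and a function (only its values on the domain matter) *)
Definition praw := (set X * (X -> X))%type.

Definition is_pbij (r : praw) : Prop :=
  [/\ measurable r.1, measurable_fun r.1 r.2 & set_inj r.1 r.2] /\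
  [/\ (forall B, measurable B -> B `<=` r.1 -> measurable (r.2 @` B)),
    (forall B, measurable B -> B `<=` r.1 -> mu (r.2 @` B) = mu B) &
    (forall x, r.1 x -> E (x, r.2 x))].

(* representatives of elements of [[R]] *)
Record pbij := PBij { praw_of : praw ; pbijP : is_pbij praw_of }.

Definition rdom (r : praw) : set X := r.1.
Definition rran (r : praw) : set X := r.2 @` r.1.

Definition rdiff (r1 r2 : praw) : set X :=
  [set x | (r1.1 x /\ ~ r2.1 x) \/ (r2.1 x /\ ~ r1.1 x) \/
           (r1.1 x /\ r2.1 x /\ r1.2 x <> r2.2 x)].

Definition req (r1 r2 : praw) : Prop :=
  exists N, [/\ measurable N, mu N = 0%E & rdiff r1 r2 `<=` N].

Definition rid : praw := (setT, id).
Definition rcomp (s t : praw) : praw :=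
  ([set x | t.1 x /\ s.1 (t.2 x)], s.2 \o t.2).
Definition is_inv (r s : praw) : Prop :=
  r.1 = s.2 @` s.1 /\ (forall x, s.1 x -> r.2 (s.2 x) = x).
Definition rprod (l : seq praw) : praw := foldr rcomp rid l.
Fixpoint glue (l : seq praw) : praw :=
  match l with
  | [::] => (set0, id)
  | r :: l' => (r.1 `|` (glue l').1,
                fun x => if `[< r.1 x >] then r.2 x else (glue l').2 x)
  end.

Fixpoint inseq (T : Type) (x : T) (l : seq T) : Prop :=
  match l with [::] => False | y :: l' => y = x \/ inseq x l' end.

Definition inFpm (F : seq pbij) (r : praw) : Prop :=
  (exists2 s, inseq s F & r = praw_of s) \/
  (exists2 s, inseq s F & is_inv r (praw_of s)) \/ r = rid.

Definition inFpmn (F : seq pbij) (n : nat) (r : praw) : Prop :=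
  exists l : seq praw, [/\ size l = n, (forall i, (i < n)%N -> inFpm F (nth rid l i))
                         & req r (rprod l)].

(* t represents an element of Sigma F_pm^n: a finite sum of pairwise
   orthogonal elements of F_pm^n *)
Definition inSigma (F : seq pbij) (n : nat) (t : pbij) : Prop :=
  exists l : seq praw,
    [/\ (forall i, (i < size l)%N -> inFpmn F n (nth rid l i)),
        (forall i j, (i < size l)%N -> (j < size l)%N -> i <> j ->
           rdom (nth rid l i) `&` rdom (nth rid l j) = set0 /\
           rran (nth rid l i) `&` rran (nth rid l j) = set0)
      & req (praw_of t) (glue l)].

Definition tau (s : pbij) : R :=
  fine (mu [set x | (praw_of s).1 x /\ (praw_of s).2 x = x]).

End FullPseudogroup.

Section PPerm.
Variable d : nat.
Definition pinjb (f : {ffun 'I_d -> option 'I_d}) : bool :=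
  [forall i, forall j, (f i != None) && (f i == f j) ==> (i == j)].
Definition pperm := {f : {ffun 'I_d -> option 'I_d} | pinjb f}.
Definition ppid : {ffun 'I_d -> option 'I_d} := [ffun i => Some i].
Definition ppcomp (a b : {ffun 'I_d -> option 'I_d}) : {ffun 'I_d -> option 'I_d} :=
  [ffun i => obind (fun j => a j) (b i)].
Definition ppdist {R : realType} (a b : {ffun 'I_d -> option 'I_d}) : R :=
  (#|[set i | a i != b i]|%:R / d%:R).
Definition pptr {R : realType} (a : {ffun 'I_d -> option 'I_d}) : R :=
  (#|[set i | a i == Some i]|%:R / d%:R).
End PPerm.

Section Entropy.
Variables (R : realType) (dX : measure_display) (X : measurableType dX).
Variables (mu : probability X R) (E : set (X * X)).
Local Notation pbij := (pbij mu E).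

Definition SA (F : seq pbij) (n : nat) (delta : R) (d : nat) : set (pbij -> pperm d) :=
  [set phi |
    [/\ (forall s t : pbij, req mu (praw_of s) (praw_of t) -> phi s = phi t),
        (forall s : pbij, req mu (praw_of s) (rid X) -> val (phi s) = ppid d),
        (forall s t u : pbij, inSigma F n s -> inSigma F n t -> inSigma F n u ->
           req mu (praw_of u) (rcomp (praw_of s) (praw_of t)) ->
           ppdist (val (phi u)) (ppcomp (val (phi s)) (val (phi t))) < delta) &
        (forall s : pbij, inSigma F n s ->
           `|pptr (val (phi s)) - tau s| < delta)]].

Definition distF (F : seq pbij) (d : nat) (phi psi : pbij -> pperm d) : R :=
  \big[Num.max/0]_(s <- F) ppdist (val (phi s)) (val (psi s)).

Definition covers (F : seq pbij) (d : nat) (eps : R) (S : set (pbij -> pperm d))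
  (k : nat) : Prop :=
  exists c : 'I_k -> (pbij -> pperm d),
    S `<=` [set phi | exists i, distF F phi (c i) <= eps].

Definition Ncov (F : seq pbij) (d : nat) (eps : R) (S : set (pbij -> pperm d)) : \bar R :=
  ereal_inf [set ((k%:R)%:E : \bar R) | k in covers F eps S].

Definition elog (x : \bar R) : \bar R :=
  match x with
  | EFin r => if r == 0 then -oo%E else (ln r)%:E
  | x => x
  end.

Definition entseq (F : seq pbij) (eps : R) (n : nat) (delta : R) : nat -> \bar R :=
  fun d => (elog (Ncov F eps (SA F n delta (d:=d))) * ((d%:R * ln d%:R)^-1)%:E)%E.

Definition s_sup (F : seq pbij) (eps : R) (n : nat) : \bar R :=
  ereal_inf [set limn_esup (entseq F eps n delta) | delta in [set delta : R | 0 < delta]].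
Definition s_inf (F : seq pbij) (eps : R) (n : nat) : \bar R :=
  ereal_inf [set limn_einf (entseq F eps n delta) | delta in [set delta : R | 0 < delta]].
Definition s_ultra (omega : set_system nat) (F : seq pbij) (eps : R) (n : nat) : \bar R :=
  ereal_inf [set lim (entseq F eps n delta @ omega) | delta in [set delta : R | 0 < delta]].

End Entropy.

Definition nonprincipal (omega : set_system nat) : Prop :=
  forall m : nat, ~ omega [set m].

(* Main.v *)
Require Import Defs.
From HB Require Import structures.
From mathcomp Require Import all_boot all_order all_algebra.
From mathcomp Require Import all_classical all_reals all_analysis.
From mathcomp Require Import zify ring lra.
Import Order.TTheory GRing.Theory Num.Theory.
Set Implicit Arguments. Unset Strict Implicit. Unset Printing Implicit Defensive.
Local Open Scope ring_scope.

Section Ball.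
Variable d : nat.
Local Notation fT := {ffun 'I_d -> option 'I_d}.
Definition hdist (a b : fT) : nat := #|[set i | a i != b i]|.
Definition hball (f : fT) (r : nat) : {set fT} := [set g | (hdist g f <= r)%N].
Definition encs (f g : fT) : seq (option ('I_d * option 'I_d)) :=
  [seq Some (i, g i) | i <- enum [set i | g i != f i]].
Definition enc (f : fT) (r : nat) (g : fT) : {ffun 'I_r -> option ('I_d * option 'I_d)} :=
  [ffun j : 'I_r => nth None (encs f g) j].

Lemma hdistE (a b : fT) : #|[set i | a i != b i]%classic| = hdist a b.
Proof. apply: eq_card => i; rewrite unfold_in /= inE; exact/asboolP/idP. Qed.

Lemma size_encs f g : size (encs f g) = hdist g f.
Proof. by rewrite /encs size_map -cardE. Qed.

Lemma mem_enc f r g p : (hdist g f <= r)%N ->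
  (Some p \in encs f g) = [exists j, enc f r g j == Some p].
Proof.
move=> hr; apply/idP/existsP.
  move=> pin; have hi : (index (Some p) (encs f g) < r)%N.
    by apply: leq_trans hr; rewrite -size_encs index_mem.
  by exists (Ordinal hi); rewrite ffunE /= nth_index.
move=> [j /eqP]; rewrite ffunE => hj.
have jlt : (j < size (encs f g))%N.
  by rewrite ltnNge; apply/negP => /(nth_default None); rewrite hj.
by rewrite -hj mem_nth.
Qed.

Lemma mem_encs f g i y : (Some (i, y) \in encs f g) = (g i != f i) && (y == g i).
Proof.
apply/mapP/andP => [[k]|[h /eqP ->]].
  by rewrite mem_enum inE => hk [-> ->].
by exists i; rewrite ?mem_enum ?inE.
Qed.

Lemma enc_inj f r : {in hball f r &, injective (enc f r)}.
Proof.
move=> g1 g2; rewrite !inE => h1 h2 he.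
have key : forall i y, (Some (i, y) \in encs f g1) = (Some (i, y) \in encs f g2).
  by move=> i y; rewrite (mem_enc _ h1) (mem_enc _ h2) he.
apply/ffunP => i.
have := key i (g1 i); have := key i (g2 i); rewrite !mem_encs !eqxx !andbT.
case: (eqVneq (g1 i) (f i)) => e1; case: (eqVneq (g2 i) (f i)) => e2 //=.
- by rewrite e1 e2.
- by move=> /eqP ->.
Qed.

Lemma card_ball f r : (#|hball f r| <= (1 + d * d.+1) ^ r)%N.
Proof.
rewrite -(card_in_imset (@enc_inj f r)).
apply: leq_trans (max_card _) _.
by rewrite card_ffun card_option card_prod card_option !card_ord add1n.
Qed.

End Ball.

Lemma foldr_mul_le (s : seq nat) b : (forall x, x \in s -> x <= b)%N ->
  (foldr muln 1 s <= b ^ size s)%N.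
Proof.
elim: s => [|x s IH] //= h; rewrite expnS leq_mul ?h ?mem_head //.
by apply: IH => y ys; apply: h; rewrite inE ys orbT.
Qed.

Section Keys.
Variables (R : realType) (dX : measure_display) (X : measurableType dX).
Variables (mu : probability X R) (E : set (X * X)).
Variable (F : seq (pbij mu E)) (d : nat).
Local Notation pb := (pbij mu E).
Local Notation fT := {ffun 'I_d -> option 'I_d}.
Local Notation m := (size F).
Definition keyT := {ffun 'I_m -> fT}.
Definition key (phi : pb -> pperm d) : keyT :=
  [ffun j => val (phi (tnth (in_tuple F) j))].

Lemma distF_tnth (phi psi : pb -> pperm d) : distF F phi psi =
  \big[Num.max/0]_(j < m) ppdist (val (phi (tnth (in_tuple F) j)))
                                  (val (psi (tnth (in_tuple F) j))).
Proof. by rewrite /distF big_tnth. Qed.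

Lemma distF_ge0 (phi psi : pb -> pperm d) : 0 <= distF F phi psi.
Proof. by rewrite /distF bigmax_ge_id. Qed.

Lemma key_dist0 phi psi : key phi = key psi -> distF F phi psi <= 0.
Proof.
move=> h; rewrite distF_tnth; apply: bigmax_le => // j _.
have := congr1 (fun k : keyT => k j) h; rewrite !ffunE => ->.
rewrite /ppdist eq_card0 ?mul0r // => i; rewrite unfold_in /= eqxx asboolF //.
Qed.

Definition kball (c : keyT) (r : nat) : {set keyT} :=
  [set K : keyT | [forall j, hdist (K j) (c j) <= r]%N].

Lemma card_kball c r : (#|kball c r| <= ((1 + d * d.+1) ^ r) ^ m)%N.
Proof.
pose g (K : keyT) : {ffun 'I_m -> {ffun 'I_r -> option ('I_d * option 'I_d)}} :=
  [ffun j => enc (c j) r (K j)].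
have ginj : {in kball c r &, injective g}.
  move=> K1 K2; rewrite !inE => /forallP h1 /forallP h2 he.
  apply/ffunP => j; have := congr1 (fun k : {ffun _ -> _} => k j) he; rewrite /g !ffunE.
  by apply: (@enc_inj d (c j) r); rewrite inE.
rewrite -(card_in_imset ginj); apply: leq_trans (max_card _) _.
by rewrite card_ffun card_ffun card_option card_prod card_option !card_ord add1n.
Qed.

Lemma dist_key (eps : R) (r : nat) phi psi : (0 < d)%N ->
  eps * d%:R < r.+1%:R -> distF F phi psi <= eps ->
  key phi \in kball (key psi) r.
Proof.
move=> d0 hr; rewrite distF_tnth => hle.
rewrite inE; apply/forallP => j; rewrite !ffunE.
have : ppdist (val (phi (tnth (in_tuple F) j))) (val (psi (tnth (in_tuple F) j))) <= eps.
  apply: le_trans hle; exact: (le_bigmax _ (fun j => ppdist _ _) j).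
rewrite /ppdist hdistE ler_pdivrMr ?ltr0n // => h.
rewrite -ltnS -(ltr_nat R); exact: le_lt_trans h hr.
Qed.

End Keys.

Section Cover.
Variables (R : realType) (dX : measure_display) (X : measurableType dX).
Variables (mu : probability X R) (E : set (X * X)).
Variable (F : seq (pbij mu E)) (d : nat).
Local Notation pb := (pbij mu E).

Lemma pinjb0 : pinjb [ffun _ : 'I_d => (None : option 'I_d)].
Proof. by apply/forallP => i; apply/forallP => j; rewrite ffunE. Qed.
Definition pp0 : pperm d := exist (fun f => is_true (pinjb f)) _ pinjb0.

Lemma cover_keys (eps : R) (S : set (pb -> pperm d)) (K : {set keyT F d}) :
  0 <= eps -> (forall phi, S phi -> key F phi \in K) -> covers F eps S #|K|.
Proof.
move=> e0 hK.
pose c (j : 'I_#|K|) : pb -> pperm d :=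
  match pselect (exists phi, S phi /\ key F phi = enum_val j) with
  | left h => projT1 (cid h)
  | right _ => fun _ => pp0 end.
exists c => phi Sphi.
have Kphi := hK _ Sphi.
exists (enum_rank_in Kphi (key F phi)).
rewrite /c; case: pselect => [h|nh]; last first.
  by exfalso; apply: nh; exists phi; split => //; rewrite enum_rankK_in.
case: (cid h) => psi [_ hpsi] /=.
apply: le_trans e0; apply: key_dist0; rewrite hpsi enum_rankK_in //.
Qed.

Lemma Ncov_min (eps : R) (S : set (pb -> pperm d)) : 0 <= eps -> exists k,
  [/\ covers F eps S k, Ncov F eps S = (k%:R)%:E & forall k', covers F eps S k' -> (k <= k')%N].
Proof.
move=> e0.
have ex : exists k, `[< covers F eps S k >].
  by exists #|[set: keyT F d]|; apply/asboolP/cover_keys => // phi _; rewrite inE.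
exists (ex_minn ex); case: ex_minnP => k /asboolP hk hmin; split => //.
  rewrite /Ncov; apply/eqP; rewrite eq_le; apply/andP; split.
    by apply: ereal_inf_lbound; exists k.
  apply: le_ereal_inf_tmp => _ [k' hk' <-]; rewrite lee_fin ler_nat; apply: hmin; exact/asboolP.
by move=> k' hk'; apply: hmin; exact/asboolP.
Qed.

Lemma main_count (eps : R) (r : nat) (S : set (pb -> pperm d)) : 0 <= eps -> (0 < d)%N ->
  eps * d%:R < r.+1%:R ->
  exists k0 k1, [/\ Ncov F 0 S = (k0%:R)%:E, Ncov F eps S = (k1%:R)%:E &
     (k0 <= k1 * ((1 + d * d.+1) ^ r) ^ size F)%N].
Proof.
move=> e0 d0 hr.
have [k0 [_ N0 min0]] := Ncov_min S (lexx 0).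
have [k1 [[c hc] N1 _]] := Ncov_min S e0.
exists k0, k1; split => //.
pose K := \bigcup_(i < k1) kball (key F (c i)) r.
have hK : forall phi, S phi -> key F phi \in K.
  move=> phi /hc [i hi]; apply/bigcupP; exists i => //; exact: dist_key hi.
apply: leq_trans (min0 _ (cover_keys (lexx 0) hK)) _.
rewrite /K; apply: leq_trans (unstable.card_big_setU _ _ _) _.
have h : (\sum_(i < k1) #|kball (key F (c i)) r| <=
          \sum_(i < k1) ((1 + d * d.+1) ^ r) ^ size F)%N.
  by apply: leq_sum => i _; exact: card_kball.
by apply: leq_trans h _; rewrite sum_nat_const card_ord.
Qed.

End Cover.

Lemma leq_expn_l (a b e : nat) : (a <= b)%N -> (a ^ e <= b ^ e)%N.
Proof. by move=> h; elim: e => // e IH; rewrite !expnS leq_mul. Qed.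

Lemma nat_bound (d r m : nat) : (2 <= d)%N ->
  (((1 + d * d.+1) ^ r) ^ m <= d ^ (4 * r * m))%N.
Proof.
move=> d2; rewrite -expnM -mulnA (expnM d 4).
apply: leq_expn_l.
have -> : (d ^ 4 = d * d * d * d)%N by rewrite !expnS expn0 muln1 !mulnA.
nia.
Qed.

Section Step.
Variables (R : realType) (dX : measure_display) (X : measurableType dX).
Variables (mu : probability X R) (E : set (X * X)).
Variable (F : seq (pbij mu E)).
Local Notation pb := (pbij mu E).

Lemma step (eps kappa : R) (d : nat) (S : set (pb -> pperm d)) :
  (2 <= d)%N -> 0 <= eps -> 4 * eps * (size F)%:R <= kappa ->
  (elog (Ncov F 0 S) * ((d%:R * ln d%:R)^-1)%:E <=
   elog (Ncov F eps S) * ((d%:R * ln d%:R)^-1)%:E + kappa%:E)%E.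
Proof.
move=> d2 e0 hk.
have d0 : (0 < d)%N by apply: leq_trans d2.
have d0R : 0 < d%:R :> R by rewrite ltr0n.
have lnd : 0 < ln d%:R :> R by rewrite ln_gt0 // ltr1n.
have c0 : 0 < (d%:R * ln d%:R)^-1 :> R by rewrite invr_gt0 mulr_gt0.
set r := Num.Def.trunc (eps * d%:R).
have /andP [rle rlt] := truncn_itv (mulr_ge0 e0 (ler0n R d)).
have [k0 [k1 [N0 N1 hk01]]] := main_count F S e0 d0 rlt.
rewrite N0 N1 /elog.
have [->|k0pos] := posnP k0.
  by rewrite eqxx gt0_mulNye ?lte_fin // leNye.
have k1pos : (0 < k1)%N.
  by case: k1 hk01 {N1} => //; rewrite mul0n leqn0 => /eqP h; rewrite h in k0pos.
rewrite !pnatr_eq0 (gtn_eqF k0pos) (gtn_eqF k1pos).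
rewrite -!EFinM -EFinD lee_fin.
set n := (4 * r * size F)%N.
have hk0 : (k0 <= k1 * d ^ n)%N.
  by apply: leq_trans hk01 _; rewrite leq_mul2l nat_bound ?orbT.
have lnk0 : ln k0%:R <= ln k1%:R + ln d%:R *+ n :> R.
  rewrite -lnXn // -lnM ?posrE ?ltr0n ?exprn_gt0 //.
  rewrite ler_ln ?posrE ?ltr0n ?mulr_gt0 ?exprn_gt0 //.
  - by rewrite -natrX -natrM ler_nat.
  - by rewrite ltr0n.
apply: le_trans (ler_wpM2r (ltW c0) lnk0) _.
rewrite mulrDl lerD2l -[ln d%:R *+ n]mulr_natr invfM mulrA mulrAC.
rewrite ler_pdivrMr //.
rewrite mulrAC mulfV ?gt_eqF // mul1r.
apply: le_trans _ (ler_wpM2r (ltW d0R) hk).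
rewrite /n !natrM.
have m0 : 0 <= (size F)%:R :> R by [].
move: rle; rewrite -/r => rle.
nra.
Qed.

End Step.

Local Open Scope classical_set_scope.
Local Open Scope ring_scope.

Section Filt.
Variable R : realType.
Local Open Scope ereal_scope.

Lemma limf_esup_shift (G : set_system nat) (FG : Filter G) (u v : nat -> \bar R) (k : R) :
  G [set n | (2 <= n)%N] -> (forall n, (2 <= n)%N -> u n <= v n + k%:E) ->
  limf_esup u G <= limf_esup v G + k%:E.
Proof.
move=> G2 huv; rewrite !limf_esupE -leeBlDr //.
apply: le_ereal_inf_tmp => _ [V GV <-]; rewrite leeBlDr //.
have GV' : G (V `&` [set n | (2 <= n)%N]) by apply: filterI.
apply: le_trans (ereal_inf_lbound _) _; first by exists (V `&` [set n | (2 <= n)%N]).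
apply: ge_ereal_sup => _ [n [Vn n2] <-].
apply: le_trans (huv _ n2) _; apply: leeD2r.
by apply: ereal_sup_ubound; exists n.
Qed.

Lemma limf_einf_shift (G : set_system nat) (FG : Filter G) (u v : nat -> \bar R) (k : R) :
  G [set n | (2 <= n)%N] -> (forall n, (2 <= n)%N -> u n <= v n + k%:E) ->
  limf_einf u G <= limf_einf v G + k%:E.
Proof.
move=> G2 huv; rewrite !limf_einfE.
apply: ge_ereal_sup => _ [V GV <-].
have GV' : G (V `&` [set n | (2 <= n)%N]) by apply: filterI.
apply: le_trans (_ : ereal_inf (u @` (V `&` [set n | (2 <= n)%N])) <= _).
  by apply: le_ereal_inf => _ [n [Vn _] <-]; exists n.
rewrite -leeBlDr //.
apply: le_trans (_ : ereal_inf (v @` (V `&` [set n | (2 <= n)%N])) <= _); last first.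
  by apply: ereal_sup_ubound; exists (V `&` [set n | (2 <= n)%N]).
apply: le_ereal_inf_tmp => _ [n [Vn n2] <-]; rewrite leeBlDr //.
apply: le_trans (huv _ n2).
by apply: ereal_inf_lbound; exists n.
Qed.

Lemma ultra_cvg (G : set_system nat) (FU : UltraFilter G) (u : nat -> \bar R) :
  u @ G --> limf_esup u G.
Proof.
have hi : forall b, limf_esup u G < b -> G [set n | u n < b].
  move=> b; rewrite limf_esupE => /ereal_inf_lt [_ [V GV <-] hV].
  apply: filterS GV => n Vn; apply: le_lt_trans hV.
  by apply: ereal_sup_ubound; exists n.
have hii : forall a, a < limf_esup u G -> G [set n | a < u n].
  move=> a aL; case: (in_ultra_setVsetC [set n | a < u n] FU) => // hC.
  exfalso; move: aL; apply/negP; rewrite -leNgt limf_esupE.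
  apply: le_trans (ereal_inf_lbound _) _; first by exists (~` [set n | a < u n]).
  by apply: ge_ereal_sup => _ [n hn <-]; rewrite leNgt; apply/negP.
move: hi hii; case: (limf_esup u G) => [r| |] hi hii A /= hA.
- have hA' : nbhs r (fun x => A x%:E) := hA.
  move/nbhs_ballP : hA' => [e e0 he].
  have h1 := hii (r - e)%:E; have h2 := hi (r + e)%:E.
  rewrite !lte_fin in h1 h2.
  have e1 : (r - e < r)%R by rewrite ltrBlDr ltrDl.
  have e2 : (r < r + e)%R by rewrite ltrDl.
  suff : G (u @^-1` A) by []. apply: (filterS _ (filterI (h1 e1) (h2 e2))) => n /=.
  case: (u n) => [y| |] //= [ly yu]; last by rewrite ltNge leNye in ly.
    apply: he; rewrite /ball /= ltr_distlC.
    by rewrite -!lte_fin ly yu.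
  by rewrite ltNge leey in yu.
- case: hA => M [Mr hM]; suff : G (u @^-1` A) by []. apply: filterS (hii M%:E (ltry _)) => n; exact: hM.
- case: hA => M [Mr hM]; suff : G (u @^-1` A) by []. apply: filterS (hi M%:E (ltNyr _)) => n; exact: hM.
Qed.

End Filt.

Lemma inf_shift (R : realType) (P : set R) (A B : R -> \bar R) (k : R) :
  (forall x, (A x <= B x + k%:E)%E) ->
  (ereal_inf [set A x | x in P] <= ereal_inf [set B x | x in P] + k%:E)%E.
Proof.
move=> h; rewrite -leeBlDr //.
apply: le_ereal_inf_tmp => _ [x Px <-]; rewrite leeBlDr //.
apply: le_trans (h x); apply: ereal_inf_lbound; by exists x.
Qed.

Lemma nonprincipal_ge2 (omega : set_system nat) (U : UltraFilter omega) :
  nonprincipal omega -> omega [set n | (2 <= n)%N].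
Proof.
move=> np; case: (in_ultra_setVsetC [set n | (2 <= n)%N] U) => // hC.
exfalso; case: (in_ultra_setVsetC [set 0%N] U) => [/np//|h0].
apply: (np 1%N); apply: filterS (filterI hC h0) => n /= [].
by case: n => [|[|n]] //= _ /(_ erefl).
Qed.

Theorem mainTheorem9 (R : realType) (dX : measure_display) (X : measurableType dX)
  (mu : probability X R) (E : set (X * X)) (F : seq (pbij mu E)) :
  standard_borel R X -> cber E -> pmp mu E ->
  [/\ (forall kappa : R, 0 < kappa -> exists2 eps : R, 0 < eps &
         forall n : nat, (s_sup F 0 n <= s_sup F eps n + kappa%:E)%E),
      (forall kappa : R, 0 < kappa -> exists2 eps : R, 0 < eps &
         forall n : nat, (s_inf F 0 n <= s_inf F eps n + kappa%:E)%E) &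
      (forall omega : set_system nat, UltraFilter omega -> nonprincipal omega ->
       forall kappa : R, 0 < kappa -> exists2 eps : R, 0 < eps &
         forall n : nat, (s_ultra omega F 0 n <= s_ultra omega F eps n + kappa%:E)%E)].
Proof.
move=> _ _ _.
pose eps (kappa : R) := kappa / (4 * (size F)%:R + 1).
have epsP : forall kappa, 0 < kappa -> 0 < eps kappa /\ 4 * eps kappa * (size F)%:R <= kappa.
  move=> kappa k0.
  have c0 : 0 < 4 * (size F)%:R + 1 :> R.
    by apply: ltr_wpDl => //; apply: mulr_ge0.
  have e0 : 0 < eps kappa by apply: divr_gt0.
  have h : eps kappa * (4 * (size F)%:R + 1) = kappa by rewrite /eps divfK ?gt_eqF.
  split => //; have m0 : 0 <= (size F)%:R :> R by [].
  nra.
have key : forall kappa, 0 < kappa -> forall n delta d, (2 <= d)%N ->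
    (entseq F 0 n delta d <= entseq F (eps kappa) n delta d + kappa%:E)%E.
  move=> kappa k0 n delta d d2; have [e0 he] := epsP _ k0.
  exact: step (ltW e0) he.
have G2 : \oo [set n | (2 <= n)%N] by exists 2%N.
split.
- move=> kappa k0; have [e0 _] := epsP _ k0; exists (eps kappa) => // n.
  apply: inf_shift => delta; apply: limf_esup_shift => //.
  exact: key.
- move=> kappa k0; have [e0 _] := epsP _ k0; exists (eps kappa) => // n.
  apply: inf_shift => delta; apply: (@limf_einf_shift R \oo) => //.
  exact: key.
- move=> omega U np kappa k0; have [e0 _] := epsP _ k0; exists (eps kappa) => // n.
  apply: inf_shift => delta.
  rewrite (cvg_lim (@ereal_hausdorff R) (@ultra_cvg R omega U (entseq F 0 n delta))).
  rewrite (cvg_lim (@ereal_hausdorff R) (@ultra_cvg R omega U (entseq F (eps kappa) n delta))).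
  apply: limf_esup_shift => //; first exact: nonprincipal_ge2.
  exact: key.
Qed.
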